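(* Let $m$ be a positive integer and let $Y \subseteq \mathbb{P}(\mathbb{C}^2\otimes\mathbb{C}^2\otimes\mathbb{C}^{m+1})$ be the Segre variety, i.e. the image of $\mathbb{P}(\mathbb{C}^2)\times\mathbb{P}(\mathbb{C}^2)\times\mathbb{P}(\mathbb{C}^{m+1}) \to \mathbb{P}(\mathbb{C}^2\otimes\mathbb{C}^2\otimes\mathbb{C}^{m+1})$, $[u]\times[v]\times[w]\mapsto[u\otimes v\otimes w]$. There exists a linear subspace $L \subseteq \mathbb{P}(\mathbb{C}^2\otimes\mathbb{C}^2\otimes\mathbb{C}^{m+1})$ of codimension $2m+5$ with $L \cap \sigma_2^\circ(Y) = \emptyset$ such that \[L \cap \sigma_2(Y) = L_1 \sqcup L_2,\] where $L_1, L_2 \subseteq \sigma_2(Y)\setminus\sigma_2^\circ(Y)$ are disjoint linear subspaces spanning $L$.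
   Context: For a subvariety $Y \subseteq \mathbb{P}(V)$, the secant locus is $\sigma_2^\circ(Y) := \bigcup_{p,q \in Y}\langle p,q\rangle$, where $\langle p,q\rangle$ is the linear span of $p$ and $q$ (so $\langle p,p\rangle = \{p\}$); the secant variety $\sigma_2(Y)$ is its Zariski closure. *)

(* Defs.v *)
From HB Require Import structures.
From mathcomp Require Import all_boot all_order all_algebra.
From mathcomp Require Import complex.
From mathcomp Require Import Rstruct.
From mathcomp Require mpoly.
From Stdlib Require Reals.

Set Implicit Arguments.
Unset Strict Implicit.
Unset Printing Implicit Defensive.
Import Order.TTheory GRing.Theory Num.Theory.
Local Open Scope ring_scope.

Notation CC := (complex Rdefinitions.R).

Definition tidx (m : nat) : finType := ('I_2 * 'I_2 * 'I_m.+1)%type.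

Definition tens (m : nat) := {ffun tidx m -> CC^o}.

Definition ptensor (m : nat) (u v : 'I_2 -> CC) (w : 'I_m.+1 -> CC) : tens m :=
  [ffun i : tidx m => u i.1.1 * v i.1.2 * w i.2].

(* Projective subsets of P(V) are represented by their affine cones minus 0,
   i.e. predicates on nonzero vectors (stable under nonzero scaling).
   [x] lies in the Segre variety Y iff x is a nonzero pure tensor. *)
Definition segre (m : nat) (x : tens m) : Prop :=
  x != 0 /\ exists u v w, x = ptensor u v w.

Definition sec_locus (m : nat) (x : tens m) : Prop :=
  x != 0 /\ exists p q : tens m, segre p /\ segre q /\
    exists a b : CC, x = a *: p + b *: q.

Definition coords (m : nat) (x : tens m) : 'I_#|tidx m| -> CC :=
  fun i => x (enum_val i).

Definition zclosure (m : nat) (S : tens m -> Prop) (x : tens m) : Prop :=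
  x != 0 /\
  forall (d : nat) (f : mpoly.mpoly #|tidx m| CC),
    f \is mpoly.ishomog1 d (mpoly.mpoly_mdeg__canonical__mpoly_Measure #|tidx m|) ->
    (forall y, S y -> mpoly.meval (coords y) f = 0) ->
    mpoly.meval (coords x) f = 0.

Definition sec_var (m : nat) : tens m -> Prop := zclosure (@sec_locus m).

(* Main.v *)
Require Import Defs.
From HB Require Import structures.
From mathcomp Require Import all_boot all_order all_algebra.
From mathcomp Require Import complex Rstruct.
From mathcomp Require Import ring fingroup perm zify.
From mathcomp Require mpoly.
Import mpoly.

Set Implicit Arguments.
Unset Strict Implicit.
Unset Printing Implicit Defensive.
Import GRing.Theory Num.Theory.
Local Open Scope ring_scope.

Lemma tD m (f g : tens m) z : (f + g) z = f z + g z.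
Proof. by rewrite ffunE. Qed.
Lemma tZ m (a : CC) (f : tens m) z : (a *: f) z = a * f z.
Proof. by rewrite ffunE. Qed.
Lemma t0 m z : (0 : tens m) z = 0.
Proof. by rewrite ffunE. Qed.
Lemma tN m (f : tens m) z : (- f) z = - f z.
Proof. by rewrite ffunE. Qed.
Lemma tS m I (r : seq I) (F : I -> tens m) z : (\sum_(i <- r) F i) z = \sum_(i <- r) F i z.
Proof. by rewrite sum_ffunE. Qed.
Lemma ptE m u v w (z : tidx m) : ptensor u v w z = u z.1.1 * v z.1.2 * w z.2.
Proof. by rewrite ffunE. Qed.

Lemma tang_core (s a0 a1 b0 b1 c0 c1 d0 d1 Pk Qk Pl Ql : CC) : s != 0 ->
  a1*b1*Pk + c1*d1*Qk = s * (a0*b0*Pk + c0*d0*Qk) ->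
  a1*b0*Pk + c1*d0*Qk = 0 ->
  a1*b1*Pl + c1*d1*Ql = s * (a0*b0*Pl + c0*d0*Ql) ->
  a1*b0*Pl + c1*d0*Ql = 0 ->
  (a0*b0*Pk + c0*d0*Qk) * (a0*b1*Pl + c0*d1*Ql)
    - (a0*b0*Pl + c0*d0*Ql) * (a0*b1*Pk + c0*d1*Qk) = 0.
Proof.
move=> s0 Rk1 Rk2 Rl1 Rl2.
pose D := a0*b0*(c1*d1) + c0*d0*(a1*b1) - a0*b1*(c1*d0) - c0*d1*(a1*b0).
have dk : s * (a0*b0*Pk + c0*d0*Qk)^+2 = Pk*Qk*D.
  transitivity ((a0*b0*Pk + c0*d0*Qk)*(a1*b1*Pk + c1*d1*Qk)
     - (a0*b1*Pk + c0*d1*Qk)*(a1*b0*Pk + c1*d0*Qk)).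
    by rewrite Rk1 Rk2; ring.
  by rewrite /D; ring.
have dl : s * (a0*b0*Pl + c0*d0*Ql)^+2 = Pl*Ql*D.
  transitivity ((a0*b0*Pl + c0*d0*Ql)*(a1*b1*Pl + c1*d1*Ql)
     - (a0*b1*Pl + c0*d1*Ql)*(a1*b0*Pl + c1*d0*Ql)).
    by rewrite Rl1 Rl2; ring.
  by rewrite /D; ring.
have pol : s * 2 * (a0*b0*Pk + c0*d0*Qk) * (a0*b0*Pl + c0*d0*Ql) = (Pk*Ql + Pl*Qk)*D.
  transitivity ((a0*b0*Pk + c0*d0*Qk)*(a1*b1*Pl + c1*d1*Ql)
     + (a0*b0*Pl + c0*d0*Ql)*(a1*b1*Pk + c1*d1*Qk)
     - (a0*b1*Pk + c0*d1*Qk)*(a1*b0*Pl + c1*d0*Ql)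
     - (a0*b1*Pl + c0*d1*Ql)*(a1*b0*Pk + c1*d0*Qk)).
    by rewrite Rl1 Rk1 Rl2 Rk2; ring.
  by rewrite /D; ring.
have sq : ((Pk*Ql - Pl*Qk)*D)^+2 = 0.
  transitivity (((Pk*Ql + Pl*Qk)*D)^+2 - 4%:R*(Pk*Qk*D)*(Pl*Ql*D)); first by ring.
  by rewrite -dk -dl -pol; ring.
move/eqP: sq; rewrite expf_eq0 /= mulf_eq0 => /orP [/eqP e | /eqP D0].
  transitivity ((Pk*Ql - Pl*Qk)*(a0*b0*(c0*d1) - c0*d0*(a0*b1))); first by ring.
  by rewrite e mul0r.
have gk0 : a0*b0*Pk + c0*d0*Qk = 0.
  by apply/eqP; move: dk; rewrite D0 mulr0 => /eqP; rewrite mulf_eq0 (negbTE s0) expf_eq0.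
have gl0 : a0*b0*Pl + c0*d0*Ql = 0.
  by apply/eqP; move: dl; rewrite D0 mulr0 => /eqP; rewrite mulf_eq0 (negbTE s0) expf_eq0.
by rewrite gk0 gl0; ring.
Qed.

Section S.
Variable m : nat.

Definition Mx (r : 'I_3 -> 'I_2 -> 'I_2 -> CC) (kk : 'I_3 -> 'I_m.+1)
  (y : tens m) : 'M[CC]_3 :=
  \matrix_(a, b) \sum_(i < 2) \sum_(j < 2) r a i j * y ((i, j), kk b).

Lemma sec_det0 r kk y : sec_locus y -> \det (Mx r kk y) = 0.
Proof.
case=> _ [p [q [[_ [u [v [w ->]]]] [[_ [u' [v' [w' ->]]]] [a [b ->]]]]]].
pose cu : 'cV[CC]_1 := 0.
pose c1 : 'M[CC]_(3,1) := \matrix_(i, j) \sum_(i' < 2) \sum_(j' < 2) r i i' j' * (u i' * v j').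
pose c2 : 'M[CC]_(3,1) := \matrix_(i, j) \sum_(i' < 2) \sum_(j' < 2) r i i' j' * (u' i' * v' j').
pose r1 : 'M[CC]_(1,3) := \matrix_(i, j) (a * w (kk j)).
pose r2 : 'M[CC]_(1,3) := \matrix_(i, j) (b * w' (kk j)).
have E : Mx r kk (a *: ptensor u v w + b *: ptensor u' v' w') =
   row_mx c1 c2 *m col_mx r1 r2.
  rewrite mul_row_col; apply/matrixP => i j.
  rewrite !mxE !big_ord1 !mxE.
  rewrite !big_ord_recl !big_ord0 /= !tD !tZ !ptE /=.
  ring.
have : (\rank (row_mx c1 c2 *m col_mx r1 r2) <= 2)%N.
  exact: leq_trans (mxrankM_maxl _ _) (rank_leq_col _).
rewrite -E; apply: contraTeq => nz.
have : Mx r kk (a *: ptensor u v w + b *: ptensor u' v' w') \in unitmx.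
  by rewrite unitmxE unitfE.
by rewrite -row_free_unit /row_free => /eqP ->.
Qed.


Lemma notsec r kk x : \det (Mx r kk x) != 0 -> ~ sec_var x.
Proof.
move=> nz [_ H].
pose N := #|tidx m|.
pose Pm : {mpoly CC[N]} := \det (\matrix_(a, b) \sum_(i < 2) \sum_(j < 2)
    r a i j *: 'X_(enum_rank ((i, j), kk b) : 'I_N)).
have ev y : meval (coords y) Pm = \det (Mx r kk y).
  rewrite /Pm -det_map_mx; congr (determinant _); apply/matrixP=> a b; rewrite !mxE.
  rewrite raddf_sum; apply: eq_bigr => i _; rewrite raddf_sum; apply: eq_bigr => j _.
  by rewrite /= mevalZ mevalXU /coords enum_rankK.
suff : meval (coords x) Pm = 0 by rewrite ev => /eqP; rewrite (negbTE nz).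
apply: (H 3%N); last by move=> y /sec_det0; rewrite ev.
have E1 a b : (\matrix_(a, b) \sum_(i < 2) \sum_(j < 2)
    r a i j *: ('X_(enum_rank ((i, j), kk b) : 'I_N) : {mpoly CC[N]})) a b
    \is 1.-homog for (mpoly.mpoly_mdeg__canonical__mpoly_Measure N).
  rewrite mxE; apply: rpred_sum => i _; apply: rpred_sum => j _; apply: rpredZ.
  by rewrite dhomogX /= mdeg1.
rewrite /Pm /determinant; apply: rpred_sum => s _.
rewrite !big_ord_recl big_ord0 mulr1.
have := dhomogM (E1 _ _) (dhomogM (E1 _ _) (E1 _ _)).
case: (odd_perm s); rewrite ?expr1 ?expr0 ?mulN1r ?mul1r //.
by move=> h; rewrite rpredN; exact: h.
Qed.

Lemma in_clos (x : tens m) (Qp : tidx m -> {poly CC}) :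
  x != 0 -> (forall z, (Qp z).[0] = x z) ->
  (forall t, t != 0 -> sec_locus [ffun z => (Qp z).[t]]) -> sec_var x.
Proof.
move=> nx h0 hs; split=> // d f _ Hf.
pose G : {poly CC} := mmap polyC (fun i => Qp (enum_val i)) f.
have hG t : G.[t] = meval (fun i => (Qp (enum_val i)).[t]) f.
  rewrite /G /mmap mevalE horner_sum; apply: eq_bigr => mm _.
  rewrite hornerM hornerC /mmap1 horner_prod; congr (_ * _); apply: eq_bigr => i _.
  by rewrite horner_exp.
have G0 : G = 0.
  apply/eqP; apply: contraT => nzG.
  have := @max_poly_roots _ G [seq (i.+1)%:R | i <- iota 0 (size G)] nzG.
  rewrite size_map size_iota ltnn; apply.
    apply/allP => t /mapP [i _ ->]; rewrite /root hG.
    rewrite -(Hf [ffun z => (Qp z).[i.+1%:R]]); last by apply: hs; rewrite pnatr_eq0.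
    by apply/eqP/meval_eq => j; rewrite /coords ffunE.
  rewrite map_inj_uniq ?iota_uniq // => a b /eqP; rewrite eqr_nat eqSS => /eqP //.
rewrite -[LHS](_ : G.[0] = _); first by rewrite G0 horner0.
by rewrite hG; apply/meval_eq => j; rewrite /coords h0.
Qed.

Definition sh1 (c : nat -> CC) (k : nat) := if k is k'.+1 then c k' else 0.
Definition sh2 (c : nat -> CC) (k : nat) := if k is k'.+2 then c k' else 0.

Definition T1 (c : nat -> CC) : tens m := [ffun z : tidx m =>
  if (z.1.1 : nat) == z.1.2 then c z.2 else if (z.1.1 : nat) == 0%N then sh1 c z.2 else 0].
Definition T2 (c : nat -> CC) : tens m := [ffun z : tidx m =>
  if (z.1.1 : nat) == z.1.2 then (if (z.1.1 : nat) == 0%N then c z.2 else - c z.2)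
  else if (z.1.1 : nat) == 1%N then sh2 c z.2 else 0].

Lemma T1E c (i j : 'I_2) (k : 'I_m.+1) : T1 c (i, j, k) =
  if (i : nat) == j then c k else if (i : nat) == 0%N then sh1 c k else 0.
Proof. by rewrite ffunE. Qed.
Lemma T2E c (i j : 'I_2) (k : 'I_m.+1) : T2 c (i, j, k) =
  if (i : nat) == j then (if (i : nat) == 0%N then c k else - c k)
  else if (i : nat) == 1%N then sh2 c k else 0.
Proof. by rewrite ffunE. Qed.

Definition i0 : 'I_2 := @Ordinal 2 0 isT.
Definition i1 : 'I_2 := @Ordinal 2 1 isT.

Lemma sec_of (y : tens m) u v w u0 v0 w0 (a b : CC) : y != 0 ->
  ptensor u0 v0 w0 != 0 -> y = a *: ptensor u v w + b *: ptensor u0 v0 w0 ->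
  sec_locus y.
Proof.
move=> ny n0 ey; split => //.
case: (ptensor u v w =P 0) => [E|NE].
  exists (ptensor u0 v0 w0), (ptensor u0 v0 w0); split; first by split=> //; eauto.
  split; first by split=> //; eauto.
  by exists 0, b; rewrite ey E scaler0 scale0r.
exists (ptensor u v w), (ptensor u0 v0 w0); split; first by split; [apply/eqP|eauto].
by split; [split=> //; eauto | exists a, b].
Qed.

Lemma T1_good c p : (p < m)%N -> c p != 0 -> (forall k, (p < k)%N -> c k = 0) ->
  sec_var (T1 c) /\ ~ sec_locus (T1 c).
Proof.
move=> pm cp cz.
have hp : (p.+1 < m.+1)%N by [].
have hp' : (p < m.+1)%N by apply: ltnW.
pose kp : 'I_m.+1 := Ordinal hp'.
pose kp1 : 'I_m.+1 := Ordinal hp.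
have nT : T1 c != 0.
  apply/eqP => /ffunP /(_ (i0, i0, kp)); rewrite T1E t0 /=; exact/eqP.
split.
  pose Qp (z : tidx m) : {poly CC} :=
    if (z.1.1 : nat) == z.1.2 then (c z.2)%:P + (sh1 c z.2)%:P * 'X
    else if (z.1.1 : nat) == 0%N then (sh1 c z.2)%:P
    else (c z.2)%:P * 'X + (sh1 c z.2)%:P * 'X^2.
  apply: (in_clos (Qp := Qp)) => //.
    move=> [[i j] k]; rewrite T1E /Qp /=.
    by case: ifP => _; [|case: ifP => _]; rewrite !hornerE /=; ring.
  move=> t tn0.
  apply: (@sec_of _ (fun i : 'I_2 => if (i : nat) == 0%N then 1 else t)
     (fun j : 'I_2 => if (j : nat) == 0%N then t else 1)
     (fun k : 'I_m.+1 => c k + t * sh1 c k)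
     (fun i : 'I_2 => if (i : nat) == 0%N then 1 else 0)
     (fun j : 'I_2 => if (j : nat) == 0%N then 0 else 1)
     (fun k : 'I_m.+1 => c k) t^-1 (- t^-1)).
  - apply/eqP => /ffunP /(_ (i0, i1, kp1)); rewrite !ffunE /Qp /= hornerC ?t0 /=.
    exact/eqP.
  - apply/eqP => /ffunP /(_ (i0, i1, kp)); rewrite !ffunE /= ?t0 !mul1r; exact/eqP.
  apply/ffunP => -[[i j] k]; rewrite !ffunE /Qp /=.
  case: i => [[|[|?]] ?] //; case: j => [[|[|?]] ?] //=; rewrite !hornerE /GRing.scale /=; field; exact: tn0.
case=> _ [p1 [q1 [[_ [u [v [w ->]]]] [[_ [u' [v' [w' ->]]]] [a [b ey]]]]]].
have E i j k : T1 c (i, j, k) = u i * v j * (a * w k) + u' i * v' j * (b * w' k).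
  by rewrite ey tD !tZ !ptE /=; ring.
have := @tang_core 1 (u i0) (u i1) (v i0) (v i1) (u' i0) (u' i1) (v' i0) (v' i1)
   (a * w kp) (b * w' kp) (a * w kp1) (b * w' kp1) (oner_neq0 _).
rewrite -!E !T1E /= !mul1r (cz p.+1) // => /(_ erefl erefl erefl erefl).
by rewrite mul0r subr0 => /eqP; rewrite mulf_eq0 orbb (negbTE cp).
Qed.

Lemma T2_good c p : (p.+1 < m)%N -> c p != 0 -> (forall k, (p < k)%N -> c k = 0) ->
  sec_var (T2 c) /\ ~ sec_locus (T2 c).
Proof.
move=> pm cp cz.
have hp : (p.+2 < m.+1)%N by [].
have hp' : (p < m.+1)%N by apply: leq_trans (leqnSn _) (ltnW hp).
pose kp : 'I_m.+1 := Ordinal hp'.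
pose kp2 : 'I_m.+1 := Ordinal hp.
have nT : T2 c != 0.
  apply/eqP => /ffunP /(_ (i0, i0, kp)); rewrite T2E t0 /=; exact/eqP.
split.
  pose Qp (z : tidx m) : {poly CC} :=
    if (z.1.1 : nat) == z.1.2 then
      (if (z.1.1 : nat) == 0%N then (c z.2)%:P + (sh2 c z.2)%:P * 'X
       else - ((c z.2)%:P + (sh2 c z.2)%:P * 'X))
    else if (z.1.1 : nat) == 0%N then - ((c z.2)%:P * 'X + (sh2 c z.2)%:P * 'X^2)
    else (sh2 c z.2)%:P.
  apply: (in_clos (Qp := Qp)) => //.
    move=> [[i j] k]; rewrite T2E /Qp /=.
    case: i => [[|[|?]] ?] //; case: j => [[|[|?]] ?] //=; rewrite !hornerE /=; ring.
  move=> t tn0.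
  apply: (@sec_of _ (fun i : 'I_2 => if (i : nat) == 0%N then t else 1)
     (fun j : 'I_2 => if (j : nat) == 0%N then 1 else - t)
     (fun k : 'I_m.+1 => c k + t * sh2 c k)
     (fun i : 'I_2 => if (i : nat) == 0%N then 0 else 1)
     (fun j : 'I_2 => if (j : nat) == 0%N then 1 else 0)
     (fun k : 'I_m.+1 => c k) t^-1 (- t^-1)).
  - apply/eqP => /ffunP /(_ (i1, i0, kp2)); rewrite !ffunE /Qp /= hornerC ?t0 /=.
    exact/eqP.
  - apply/eqP => /ffunP /(_ (i1, i0, kp)); rewrite !ffunE /= ?t0 !mul1r; exact/eqP.
  apply/ffunP => -[[i j] k]; rewrite !ffunE /Qp /=.
  case: i => [[|[|?]] ?] //; case: j => [[|[|?]] ?] //=; rewrite !hornerE /GRing.scale /=; field; exact: tn0.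
case=> _ [p1 [q1 [[_ [u [v [w ->]]]] [[_ [u' [v' [w' ->]]]] [a [b ey]]]]]].
have E i j k : T2 c (j, i, k) = v i * u j * (a * w k) + v' i * u' j * (b * w' k).
  by rewrite ey tD !tZ !ptE /=; ring.
have hn1 : (-1 : CC) != 0 by rewrite oppr_eq0 oner_eq0.
have := @tang_core (-1) (v i0) (v i1) (u i0) (u i1) (v' i0) (v' i1) (u' i0) (u' i1)
   (a * w kp) (b * w' kp) (a * w kp2) (b * w' kp2) hn1.
rewrite -!E !T2E /= !mulN1r (cz p.+2) // => /(_ erefl erefl erefl erefl).
by rewrite mul0r subr0 => /eqP; rewrite mulf_eq0 orbb (negbTE cp).
Qed.

Definition rv (w : 'I_2 -> 'I_2 -> CC) (x : tens m) (k : nat) :=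
  \sum_(i < 2) \sum_(j < 2) w i j * x ((i, j), inord k).

Lemma tri_det (x : tens m) (w0 w1 w2 : 'I_2 -> 'I_2 -> CC) (k0 k1 k2 : nat) :
  rv w0 x k1 = 0 -> rv w0 x k2 = 0 -> rv w1 x k2 = 0 ->
  rv w0 x k0 != 0 -> rv w1 x k1 != 0 -> rv w2 x k2 != 0 ->
  exists r kk, \det (Mx r kk x) != 0.
Proof.
move=> e01 e02 e12 n0 n1 n2.
exists (fun a : 'I_3 => if (a : nat) == 0%N then w0 else if (a : nat) == 1%N then w1 else w2).
exists (fun b : 'I_3 => inord (if (b : nat) == 0%N then k0 else if (b : nat) == 1%N then k1 else k2)).
rewrite det_trig; last first.
  apply/is_trig_mxP => -[[|[|[|?]]] ?] [[|[|[|?]]] ?] //= _; rewrite mxE /=; by [].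
rewrite !big_ord_recl big_ord0 mulr1 !mxE /=.
by rewrite !mulf_neq0.
Qed.

Definition wG (i j : 'I_2) : CC := if (i : nat) == j then 1 else 0.
Definition wH (i j : 'I_2) : CC := if ((i : nat) == 0%N) && ((j : nat) == 1%N) then 1 else 0.
Definition wG' (i j : 'I_2) : CC := if (i : nat) == j then (if (i : nat) == 0%N then 1 else -1) else 0.
Definition wH' (i j : 'I_2) : CC := if ((i : nat) == 1%N) && ((j : nat) == 0%N) then 1 else 0.

Lemma rvE c d k : (k <= m)%N ->
  [/\ rv wG (T1 c + T2 d) k = 2%:R * c k, rv wH (T1 c + T2 d) k = sh1 c k,
      rv wG' (T1 c + T2 d) k = 2%:R * d k & rv wH' (T1 c + T2 d) k = sh2 d k].
Proof.
move=> km; rewrite /rv !big_ord_recl !big_ord0 !tD !T1E !T2E /= inordK //.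
rewrite /wG /wH /wG' /wH' /=.
split; ring.
Qed.

Lemma mixed c d p q : (p < m)%N -> c p != 0 -> (forall k, (p < k)%N -> c k = 0) ->
  (q.+1 < m)%N -> d q != 0 -> (forall k, (q < k)%N -> d k = 0) ->
  exists r kk, \det (Mx r kk (T1 c + T2 d)) != 0.
Proof.
move=> pm cp cz qm dq dz.
have two0 : (2%:R : CC) != 0 by rewrite pnatr_eq0.
have E k := rvE c d (k := k).
case: (ltnP q p) => [qp|pq].
  have [a1 _ a3 _] := E q ltac:(lia).
  have [b1 _ b3 _] := E p ltac:(lia).
  have [c1 c2 c3 _] := E p.+1 ltac:(lia).
  apply: (tri_det (w0 := wG') (w1 := wG) (w2 := wH) (k0 := q) (k1 := p) (k2 := p.+1)).
  - by rewrite b3 dz ?mulr0.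
  - by rewrite c3 dz ?mulr0 // ltnW.
  - by rewrite c1 cz ?mulr0.
  - by rewrite a3 mulf_neq0.
  - by rewrite b1 mulf_neq0.
  - by rewrite c2.
case: (ltnP p.+1 q) => [pq1|qp1].
  have [a1 a2 _ _] := E p ltac:(lia).
  have [b1 b2 _ _] := E p.+1 ltac:(lia).
  have [c1 c2 c3 _] := E q ltac:(lia).
  apply: (tri_det (w0 := wG) (w1 := wH) (w2 := wG') (k0 := p) (k1 := p.+1) (k2 := q)).
  - by rewrite b1 cz ?mulr0.
  - by rewrite c1 cz ?mulr0 // ltnW.
  - by rewrite c2; case: q pq1 {c1 c2 c3 qm dq dz pq} => // q' /= h; rewrite cz // ltnW.
  - by rewrite a1 mulf_neq0.
  - by rewrite b2.
  - by rewrite c3 mulf_neq0.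
have [a1 a2 _ _] := E p ltac:(lia).
have [b1 b2 _ _] := E p.+1 ltac:(lia).
have [c1 c2 _ c4] := E q.+2 ltac:(lia).
apply: (tri_det (w0 := wG) (w1 := wH) (w2 := wH') (k0 := p) (k1 := p.+1) (k2 := q.+2)).
- by rewrite b1 cz ?mulr0.
- by rewrite c1 cz ?mulr0 // ltnS ltnW.
- by rewrite c2 /= cz // ltnS.
- by rewrite a1 mulf_neq0.
- by rewrite b2.
- by rewrite c4.
Qed.

Lemma sh1_sum n (a : 'I_n -> CC) (f : 'I_n -> nat -> CC) k :
  sh1 (fun k => \sum_(i < n) a i * f i k) k = \sum_(i < n) a i * sh1 (f i) k.
Proof. by case: k => [|k] /=; [rewrite big1 // => i _; rewrite mulr0 | ]. Qed.
Lemma sh2_sum n (a : 'I_n -> CC) (f : 'I_n -> nat -> CC) k :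
  sh2 (fun k => \sum_(i < n) a i * f i k) k = \sum_(i < n) a i * sh2 (f i) k.
Proof.
case: k => [|[|k]] //=; rewrite big1 // => i _; by rewrite mulr0.
Qed.
Lemma T1_lin n (a : 'I_n -> CC) f :
  T1 (fun k => \sum_(i < n) a i * f i k) = \sum_(i < n) a i *: T1 (f i).
Proof.
apply/ffunP => z; rewrite tS [LHS]ffunE.
rewrite [RHS](eq_bigr (fun i => a i * T1 (f i) z)); last by move=> i _; rewrite !ffunE.
under [in RHS]eq_bigr do rewrite ffunE.
case: ifP => _ //; case: ifP => _; first exact: sh1_sum.
by rewrite big1 // => i _; rewrite mulr0.
Qed.
Lemma T2_lin n (a : 'I_n -> CC) f :
  T2 (fun k => \sum_(i < n) a i * f i k) = \sum_(i < n) a i *: T2 (f i).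
Proof.
apply/ffunP => z; rewrite tS [LHS]ffunE.
rewrite [RHS](eq_bigr (fun i => a i * T2 (f i) z)); last by move=> i _; rewrite !ffunE.
under [in RHS]eq_bigr do rewrite ffunE.
case: ifP => _.
  case: ifP => _ //; rewrite -sumrN; apply: eq_bigr => i _; ring.
case: ifP => _; first exact: sh2_sum.
by rewrite big1 // => i _; rewrite mulr0.
Qed.
Lemma T1_ext c c' : c =1 c' -> T1 c = T1 c'.
Proof.
move=> e; apply/ffunP => z; rewrite !ffunE /sh1 !e.
by case: (z.2 : nat) => // k; rewrite e.
Qed.
Lemma T2_ext c c' : c =1 c' -> T2 c = T2 c'.
Proof.
move=> e; apply/ffunP => z; rewrite !ffunE /sh2 !e.
by case: (z.2 : nat) => [|[|k]] //; rewrite e.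
Qed.
Lemma T1_inj c k : (k <= m)%N -> T1 c = 0 -> c k = 0.
Proof. by move=> km /ffunP /(_ (i0, i0, inord k)); rewrite T1E t0 /= inordK. Qed.
Lemma T2_inj c k : (k <= m)%N -> T2 c = 0 -> c k = 0.
Proof. by move=> km /ffunP /(_ (i0, i0, inord k)); rewrite T2E t0 /= inordK. Qed.

Section Gen.
Variable T : (nat -> CC) -> tens m.
Hypothesis Tlin : forall n (a : 'I_n -> CC) f,
  T (fun k => \sum_(i < n) a i * f i k) = \sum_(i < n) a i *: T (f i).
Hypothesis Text : forall c c', c =1 c' -> T c = T c'.
Hypothesis Tinj : forall c k, (k <= m)%N -> T c = 0 -> c k = 0.

Definition dl (i : nat) : nat -> CC := fun k => (k == i)%:R.
Definition Wsp N : {vspace tens m} := <<[tuple T (dl i) | i < N]>>%VS.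

Lemma T0 c : (forall k, c k = 0) -> T c = 0.
Proof.
move=> h; rewrite (Text (c' := fun k => \sum_(i < 0) 0 * dl i k)).
  by rewrite Tlin big_ord0.
by move=> k; rewrite big_ord0.
Qed.

Lemma dl_sum_in N (a : 'I_N -> CC) (i : 'I_N) :
  \sum_(j < N) a j * dl j i = a i.
Proof.
rewrite (bigD1 i) //= big1 /dl ?eqxx ?mulr1 ?addr0 // => j nj.
by case: eqP => [e|]; [case/eqP: nj; apply/val_inj | rewrite mulr0].
Qed.
Lemma dl_sum_out N (a : 'I_N -> CC) k : (N <= k)%N ->
  \sum_(j < N) a j * dl j k = 0.
Proof.
move=> Nk; rewrite big1 // => j _; rewrite /dl; case: eqP => [e|]; last by rewrite mulr0.
by move: (ltn_ord j); rewrite -e ltnNge Nk.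
Qed.

Lemma memW N x : x \in Wsp N <-> exists c, (forall k, (N <= k)%N -> c k = 0) /\ x = T c.
Proof.
split.
  move=> /coord_span ->.
  exists (fun k => \sum_(i < N) coord [tuple T (dl i) | i < N] i x * dl i k); split.
    by move=> k Nk; rewrite dl_sum_out.
  by rewrite Tlin; apply: eq_bigr => i _; rewrite nth_mktuple.
move=> [c [cs ->]].
rewrite (Text (c' := fun k => \sum_(i < N) c i * dl i k)); last first.
  move=> k; case: (ltnP k N) => kN; last by rewrite dl_sum_out // cs.
  by rewrite -[k]/(val (Ordinal kN)) dl_sum_in.
rewrite Tlin; apply: rpred_sum => i _; apply: rpredZ; apply: memv_span.
by apply/tnthP; exists i; rewrite tnth_mktuple.
Qed.

Lemma dimW N : (N <= m.+1)%N -> \dim (Wsp N) = N.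
Proof.
move=> Nm.
have : free [tuple T (dl i) | i < N].
  apply/freeP => a; under eq_bigr do rewrite nth_mktuple; rewrite -Tlin => h i.
  have := Tinj (k := i) _ h; rewrite dl_sum_in; apply.
  by rewrite -ltnS (leq_trans (ltn_ord i)).
by rewrite /free size_tuple => /eqP.
Qed.

End Gen.

End S.

Lemma dimfull m : \dim (fullv : {vspace tens m}) = (4 * m.+1)%N.
Proof.
rewrite dimvf; rewrite /dim /= !card_prod !card_ord; change (dim _) with 1%N; by rewrite muln1.
Qed.

Lemma maxidx (c : nat -> CC) N : (forall k, (N <= k)%N -> c k = 0) ->
  ~ (forall k, c k = 0) ->
  exists p, [/\ (p < N)%N, c p != 0 & forall k, (p < k)%N -> c k = 0].
Proof.
move=> cs nz.
have ex : exists k, c k != 0.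
  case: (boolP [exists k : 'I_N, c k != 0]) => [/existsP [k hk]|]; first by exists k.
  move=> /existsPn h; case: nz => k; case: (ltnP k N) => kN; last exact: cs.
  by move: (h (Ordinal kN)); rewrite negbK => /eqP.
have ub : forall k, c k != 0 -> (k <= N)%N.
  move=> k; apply: contraNT; rewrite -ltnNge => /ltnW /cs ->; by rewrite eqxx.
case: (ex_maxnP ex ub) => p cp mx.
exists p; split => //.
  by rewrite ltnNge; apply: contra cp => /cs ->; rewrite eqxx.
by move=> k pk; apply/eqP; apply: contraTT pk => /mx; rewrite leqNgt.
Qed.

Unset Implicit Arguments.

Theorem theorem4p7 (m : nat) (hm : (0 < m)%N) :
  exists W : {vspace tens m},
    (\dim W + (2 * m + 5) = \dim (fullv : {vspace tens m}))%N /\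
    (forall x : tens m, x \in W -> ~ sec_locus x) /\
    exists W1 W2 : {vspace tens m},
      (W1 :&: W2 = 0)%VS /\
      (W1 + W2 = W)%VS /\
      (forall x : tens m, x != 0 -> x \in W1 -> sec_var x /\ ~ sec_locus x) /\
      (forall x : tens m, x != 0 -> x \in W2 -> sec_var x /\ ~ sec_locus x) /\
      (forall x : tens m, x \in W -> (sec_var x <-> x != 0 /\ (x \in W1 \/ x \in W2))).
Proof.
pose W1 := Wsp (@T1 m) m.
pose W2 := Wsp (@T2 m) m.-1.
have M1 := @memW m (@T1 m) (@T1_lin m) (@T1_ext m) m.
have M2 := @memW m (@T2 m) (@T2_lin m) (@T2_ext m) m.-1.
have D1 : \dim W1 = m by apply: (@dimW m (@T1 m) (@T1_lin m) (@T1_inj m)).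
have D2 : \dim W2 = m.-1.
  by apply: (@dimW m (@T2 m) (@T2_lin m) (@T2_inj m)); lia.
have Z1 (c : nat -> CC) : (forall k, c k = 0) -> T1 m c = 0 := @T0 m (@T1 m) (@T1_lin m) (@T1_ext m) c.
have Z2 (c : nat -> CC) : (forall k, c k = 0) -> T2 m c = 0 := @T0 m (@T2 m) (@T2_lin m) (@T2_ext m) c.
have key1 x : x != 0 -> x \in W1 -> sec_var x /\ ~ sec_locus x.
  move=> nx /M1 [c [cs ex]]; subst x.
  have nz : ~ (forall k, c k = 0) by move=> h; case/eqP: nx; apply: Z1.
  have [p [pm cp cz]] := maxidx cs nz; exact: T1_good pm cp cz.
have key2 x : x != 0 -> x \in W2 -> sec_var x /\ ~ sec_locus x.
  move=> nx /M2 [c [cs ex]]; subst x.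
  have nz : ~ (forall k, c k = 0) by move=> h; case/eqP: nx; apply: Z2.
  have [p [pm cp cz]] := maxidx cs nz; apply: T2_good cp cz; lia.
have outside x : x \in (W1 + W2)%VS -> x \notin W1 -> x \notin W2 ->
    exists r kk, \det (@Mx m r kk x) != 0.
  move=> /memv_addP [x1 /M1 [c [cs ->]] [x2 /M2 [d [ds ->]] ->]] n1 n2.
  have nzc : ~ (forall k, c k = 0).
    by move=> h; case/negP: n2; rewrite Z1 // add0r; apply/M2; exists d.
  have nzd : ~ (forall k, d k = 0).
    by move=> h; case/negP: n1; rewrite Z2 // addr0; apply/M1; exists c.
  have [p [pm cp cz]] := maxidx cs nzc.
  have [q [qm dq dz]] := maxidx ds nzd.
  apply: mixed cp cz _ dq dz => //; lia.
have cap : (W1 :&: W2 = 0)%VS.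
  apply/eqP; rewrite -subv0; apply/subvP => x /memv_capP [/M1 [c [cs ->]] /M2 [d [ds e]]].
  rewrite memv0; apply/eqP; apply: Z1 => k.
  case: (ltnP k m) => km; last exact: cs.
  have := congr1 (fun f : tens m => f (i0, i1, inord k.+1)) e.
  by rewrite /= T1E T2E /= inordK.
exists (W1 + W2)%VS; split.
  have := dimv_sum_cap W1 W2; rewrite cap dimv0 addn0 D1 D2 => ->.
  rewrite dimfull; lia.
split.
  move=> x xW sx; have nx : x != 0 by case: sx.
  case: (boolP (x \in W1)) => [x1|n1]; first exact: (key1 x nx x1).2 sx.
  case: (boolP (x \in W2)) => [x2|n2]; first exact: (key2 x nx x2).2 sx.
  have [r [kk]] := outside x xW n1 n2.
  by rewrite (sec_det0 r kk sx) eqxx.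
exists W1, W2; split => //; split => //; split => //; split => //.
move=> x xW; split.
  move=> sv; split; first by case: sv.
  case: (boolP (x \in W1)) => [|n1]; first by left.
  case: (boolP (x \in W2)) => [|n2]; first by right.
  have [r [kk d]] := outside x xW n1 n2.
  by case: (notsec d sv).
by case=> nx [x1|x2]; [exact: (key1 x nx x1).1 | exact: (key2 x nx x2).1].
Qed.
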